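(* Let $\mu=\alpha_-\delta_{-\infty}+\alpha_0\mu_0+\alpha_+\delta_{+\infty}\in\mathcal{P}(\overline{\mathbb{Z}})$ with $\alpha_\sigma\ge0$, $\alpha_-+\alpha_0+\alpha_+=1$, $\mu_0\in\mathcal{P}(\mathbb{Z})$, and let $\varepsilon>0$. If $R\in\mathbb{N}$ satisfies $R>R_{\mu_0}(\varepsilon)$, then for all $n\in\mathbb{N}$ and all $w\in\Omega^{(0)}_n(\mu,2^{-R}\varepsilon)$, $$|N^\sigma(w)-\alpha_\sigma n|<2\varepsilon n\quad\text{for }\sigma\in\{-,0,+\},\qquad N_m(w)<3\varepsilon n\quad\text{for }m\in\{-R,-R+1,R-1,R\}.$$
   Context: $\overline{\mathbb{Z}}=\mathbb{Z}\cup\{\pm\infty\}$ with metric $d(h,k)=|\varphi(h)-\varphi(k)|$, $\varphi(\pm\infty)=\pm1$, $\varphi(k)=1-2^{-k}$ ($k\ge0$), $\varphi(k)=-1+2^{-|k|}$ ($k<0$). For signed measures, $\|\nu\|=\sup\{\int f\,d\nu: f\text{ 1-Lipschitz for }d,\ \sup|f|\le1\}$; $B(\mu,\varepsilon)=\{\nu\in\mathcal{P}(\overline{\mathbb{Z}}):\|\nu-\mu\|<\varepsilon\}$. $\Omega^{(0)}_n$ is the set of words $w=(w_1,\dots,w_n)\in\mathbb{Z}^n$ with $w_1=0$ and $|w_i-w_{i+1}|=1$ for all $i$; $\ell(w)=\frac1n\sum_{j=1}^n\delta_{w_j}$; $\Omega^{(0)}_n(\mu,\varepsilon)=\{w\in\Omega^{(0)}_n:\ell(w)\in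 B(\mu,\varepsilon)\}$. For $R\in\mathbb{N}$: $A^-=\{k\in\overline{\mathbb{Z}}:k\le-R\}$, $A^0=\{-R+1,\dots,R-1\}$, $A^+=\{k\in\overline{\mathbb{Z}}:k\ge R\}$. $N^\sigma(w)=\#\{j\le n:w_j\in A^\sigma\}$ and $N_m(w)=\#\{j\le n:w_j=m\}$. $R_{\mu_0}(\varepsilon)=\min\{R\in\mathbb{N}:\mu_0(\{-R+1,\dots,R-1\})>1-\varepsilon\}$. *)

(* Defs.v *)
From Stdlib Require Import Reals ZArith List.
From Coquelicot Require Import Coquelicot.
Open Scope R_scope.

Inductive zbar : Type := NegInf | Fin (k : Z) | PosInf.

Definition phi (h : zbar) : R :=
  match h with
  | NegInf => -1
  | PosInf => 1
  | Fin k => if Z.leb 0 k then 1 - / pow 2 (Z.to_nat k)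
             else -1 + / pow 2 (Z.to_nat (Z.abs k))
  end.

Definition dist (h k : zbar) : R := Rabs (phi h - phi k).

Definition admissible (f : zbar -> R) : Prop :=
  (forall h k, Rabs (f h - f k) <= dist h k) /\ (forall h, Rabs (f h) <= 1).

(* A signed measure nu is represented by its integration functional I f = ∫ f dnu;
   ||nu|| = sup { ∫ f dnu : f admissible }. *)
Definition dual_norm (I : (zbar -> R) -> R) : Rbar :=
  Lub_Rbar (fun x => exists f, admissible f /\ x = I f).

Definition pos_part (g : Z -> R) (n : nat) : R := g (Z.of_nat n).
Definition neg_part (g : Z -> R) (n : nat) : R := g (- Z.of_nat (S n))%Z.

Definition is_prob_Z (p : Z -> R) : Prop :=
  (forall k, 0 <= p k) /\
  exists a b, is_series (pos_part p) a /\ is_series (neg_part p) b /\ a + b = 1.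

Definition int_Z (p : Z -> R) (g : Z -> R) : R :=
  Series (pos_part (fun k => p k * g k)) + Series (neg_part (fun k => p k * g k)).

Definition int_mu (am a0 ap : R) (p : Z -> R) (f : zbar -> R) : R :=
  am * f NegInf + a0 * int_Z p (fun k => f (Fin k)) + ap * f PosInf.

Definition int_ell (w : list Z) (f : zbar -> R) : R :=
  / INR (length w) * fold_right Rplus 0 (map (fun z => f (Fin z)) w).

Fixpoint steps_pm1 (w : list Z) : Prop :=
  match w with
  | x :: ((y :: _) as t) => Z.abs (x - y) = 1%Z /\ steps_pm1 t
  | _ => True
  end.

Definition Omega0 (n : nat) (w : list Z) : Prop :=
  length w = n /\ hd_error w = Some 0%Z /\ steps_pm1 w.

Definition Omega0_ball (n : nat) (am a0 ap : R) (p : Z -> R) (eps : R) (w : list Z)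
  : Prop :=
  Omega0 n w /\
  Rbar_lt (dual_norm (fun f => int_ell w f - int_mu am a0 ap p f)) (Finite eps).

(* mu0({-R+1, ..., R-1}) *)
Definition mass0 (p : Z -> R) (R0 : nat) : R :=
  fold_right Rplus 0
    (map (fun i => p (Z.of_nat i - Z.of_nat R0 + 1)%Z) (seq 0 (2 * R0 - 1))).

Definition is_Rmu0 (p : Z -> R) (eps : R) (r : nat) : Prop :=
  mass0 p r > 1 - eps /\ (forall r', (r' < r)%nat -> mass0 p r' <= 1 - eps).

Definition cnt_minus (R0 : nat) (w : list Z) : nat :=
  length (filter (fun z => Z.leb z (- Z.of_nat R0)) w).
Definition cnt_zero (R0 : nat) (w : list Z) : nat :=
  length (filter (fun z => andb (Z.leb (- Z.of_nat R0 + 1) z) (Z.leb z (Z.of_nat R0 - 1))) w).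
Definition cnt_plus (R0 : nat) (w : list Z) : nat :=
  length (filter (fun z => Z.leb (Z.of_nat R0) z) w).
Definition cnt_m (m : Z) (w : list Z) : nat :=
  length (filter (fun z => Z.eqb z m) w).

(* Main.v *)
Require Import Defs.
From Stdlib Require Import Reals ZArith List Lra Lia.
From Coquelicot Require Import Coquelicot.
Open Scope R_scope.

Definition fsum (l : list R) : R := fold_right Rplus 0 l.

Lemma fsum_app l1 l2 : fsum (l1 ++ l2) = fsum l1 + fsum l2.
Proof. induction l1; simpl; [ring| unfold fsum in *; simpl; rewrite IHl1; ring]. Qed.

Lemma map_seq_shift (f : nat -> R) a len :
  map f (seq a len) = map (fun j => f (a + j)%nat) (seq 0 len).
Proof.
  revert f; induction a; intro f; simpl.
  - reflexivity.
  - rewrite <- seq_shift, map_map. rewrite IHa. reflexivity.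
Qed.

Lemma fsum_ext_seq (f g : nat -> R) N :
  (forall i, (i < N)%nat -> f i = g i) ->
  fsum (map f (seq 0 N)) = fsum (map g (seq 0 N)).
Proof.
  intro H. f_equal. apply map_ext_in. intros i Hi. apply in_seq in Hi. apply H; lia.
Qed.

Lemma rev_sum (q : Z -> R) s :
  fsum (map (fun i => q (Z.of_nat i - Z.of_nat s)%Z) (seq 0 s)) =
  fsum (map (fun i => q (- Z.of_nat (S i))%Z) (seq 0 s)).
Proof.
  induction s.
  - reflexivity.
  - rewrite seq_S at 2. rewrite map_app, fsum_app. rewrite <- IHs.
    change (seq 0 (S s)) with (0%nat :: seq 1 s).
    rewrite <- seq_shift. cbn [map]. rewrite (map_map S).
    assert (E: map (fun x => q (Z.of_nat (S x) - Z.of_nat (S s))%Z) (seq 0 s) =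
               map (fun i => q (Z.of_nat i - Z.of_nat s)%Z) (seq 0 s)).
    { apply map_ext. intro i. f_equal. lia. }
    cbn [map]. rewrite E. unfold fsum at 1 3. cbn [fold_right].
    replace (Z.of_nat 0 - Z.of_nat (S s))%Z with (- Z.of_nat (S s))%Z by lia.
    unfold fsum. simpl (0+s)%nat. ring.
Qed.

Lemma mass0_S p s :
  mass0 p (S s) = fsum (map (pos_part p) (seq 0 (S s))) + fsum (map (neg_part p) (seq 0 s)).
Proof.
  unfold mass0. replace (2 * S s - 1)%nat with (s + S s)%nat by lia.
  rewrite seq_app. change (fold_right Rplus 0 ?l) with (fsum l).
  rewrite map_app, fsum_app. rewrite Rplus_comm. f_equal.
  - rewrite map_seq_shift. f_equal. apply map_ext. intro j. unfold pos_part. f_equal. lia.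
  - unfold neg_part. rewrite <- (rev_sum p s). f_equal. apply map_ext. intro j. f_equal. lia.
Qed.

Lemma Series_zero : Series (fun _ => 0) = 0.
Proof.
  transitivity (Series (fun n => 0 * (fun _ : nat => 1) n)).
  - apply Series_ext; intros; ring.
  - rewrite Series_scal_l. ring.
Qed.

Lemma Series_nonneg a : (forall n, 0 <= a n) -> ex_series a -> 0 <= Series a.
Proof.
  intros Ha Hex. rewrite <- Series_zero. apply Series_le; auto.
  intros; split; [lra | apply Ha].
Qed.

Lemma partial_le N : forall a : nat -> R, (forall n, 0 <= a n) -> ex_series a ->
  fsum (map a (seq 0 N)) <= Series a.
Proof.
  induction N; intros a Ha Hex.
  - apply Series_nonneg; auto.
  - change (seq 0 (S N)) with (0%nat :: seq 1 N).
    rewrite <- seq_shift. cbn [map]. rewrite (map_map S).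
    rewrite (Series_incr_1 a Hex). unfold fsum at 1. cbn [fold_right].
    apply Rplus_le_compat_l. apply IHN.
    + intro; apply Ha.
    + apply (ex_series_incr_1 a). exact Hex.
Qed.

Definition Bnd (g : Z -> R) := forall k, 0 <= g k <= 1.

Lemma ex_pp p g : is_prob_Z p -> Bnd g -> ex_series (pos_part (fun k => p k * g k)).
Proof.
  intros [Hp [a [b [Ha [Hb _]]]]] Hg.
  apply (@ex_series_le R_AbsRing R_CompleteNormedModule _ (pos_part p)).
  - intro n. change (norm _) with (Rabs (p (Z.of_nat n) * g (Z.of_nat n))). unfold pos_part.
    specialize (Hp (Z.of_nat n)); specialize (Hg (Z.of_nat n)).
    rewrite Rabs_pos_eq by nra. nra.
  - exists a. exact Ha.
Qed.

Lemma ex_np p g : is_prob_Z p -> Bnd g -> ex_series (neg_part (fun k => p k * g k)).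
Proof.
  intros [Hp [a [b [Ha [Hb _]]]]] Hg.
  apply (@ex_series_le R_AbsRing R_CompleteNormedModule _ (neg_part p)).
  - intro n. change (norm _) with (Rabs (p (- Z.of_nat (S n))%Z * g (- Z.of_nat (S n))%Z)). unfold neg_part.
    specialize (Hp (- Z.of_nat (S n))%Z); specialize (Hg (- Z.of_nat (S n))%Z).
    rewrite Rabs_pos_eq by nra. nra.
  - exists b. exact Hb.
Qed.

Lemma int_Z_ext p g h : (forall k, g k = h k) -> int_Z p g = int_Z p h.
Proof.
  intro H. unfold int_Z. f_equal; apply Series_ext; intro n; unfold pos_part, neg_part; rewrite H; reflexivity.
Qed.

Lemma int_Z_scal p c g : int_Z p (fun k => c * g k) = c * int_Z p g.
Proof.
  unfold int_Z. rewrite Rmult_plus_distr_l, <- !Series_scal_l.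
  f_equal; apply Series_ext; intro n; unfold pos_part, neg_part; ring.
Qed.

Lemma int_Z_opp p g : int_Z p (fun k => - g k) = - int_Z p g.
Proof.
  unfold int_Z. rewrite Ropp_plus_distr, <- !Series_opp.
  f_equal; apply Series_ext; intro n; unfold pos_part, neg_part; ring.
Qed.

Lemma int_Z_plus p g h : is_prob_Z p -> Bnd g -> Bnd h ->
  int_Z p (fun k => g k + h k) = int_Z p g + int_Z p h.
Proof.
  intros P Hg Hh. unfold int_Z.
  pose proof (Series_plus _ _ (ex_pp p g P Hg) (ex_pp p h P Hh)) as E1.
  pose proof (Series_plus _ _ (ex_np p g P Hg) (ex_np p h P Hh)) as E2.
  assert (F1: Series (pos_part (fun k => p k * (g k + h k))) = Series (fun n => pos_part (fun k => p k * g k) n + pos_part (fun k => p k * h k) n))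
    by (apply Series_ext; intro n; unfold pos_part; ring).
  assert (F2: Series (neg_part (fun k => p k * (g k + h k))) = Series (fun n => neg_part (fun k => p k * g k) n + neg_part (fun k => p k * h k) n))
    by (apply Series_ext; intro n; unfold neg_part; ring).
  lra.
Qed.

Lemma int_Z_one p : is_prob_Z p -> int_Z p (fun _ => 1) = 1.
Proof.
  intros [Hp [a [b [Ha [Hb Hab]]]]]. unfold int_Z.
  pose proof (is_series_unique _ _ Ha). pose proof (is_series_unique _ _ Hb).
  assert (Series (pos_part (fun k => p k * 1)) = Series (pos_part p)) by (apply Series_ext; intro n; unfold pos_part; ring).
  assert (Series (neg_part (fun k => p k * 1)) = Series (neg_part p)) by (apply Series_ext; intro n; unfold neg_part; ring).
  lra.
Qed.

Lemma int_Z_nonneg p g : is_prob_Z p -> Bnd g -> 0 <= int_Z p g.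
Proof.
  intros P Hg. pose proof P as [Hp _]. unfold int_Z.
  apply Rplus_le_le_0_compat; apply Series_nonneg.
  - intro n; unfold pos_part; specialize (Hp (Z.of_nat n)); specialize (Hg (Z.of_nat n)); nra.
  - apply ex_pp; auto.
  - intro n; unfold neg_part; specialize (Hp (- Z.of_nat (S n))%Z); specialize (Hg (- Z.of_nat (S n))%Z); nra.
  - apply ex_np; auto.
Qed.

Lemma Bnd_one : Bnd (fun _ => 1).
Proof. intro; lra. Qed.

Lemma int_Z_le1 p g : is_prob_Z p -> Bnd g -> int_Z p g <= 1.
Proof.
  intros P Hg.
  assert (Hc : Bnd (fun k => 1 - g k)) by (intro k; specialize (Hg k); lra).
  pose proof (int_Z_plus p g (fun k => 1 - g k) P Hg Hc) as E.
  rewrite (int_Z_ext p _ (fun _ => 1)) in E by (intro; ring).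
  rewrite int_Z_one in E by auto.
  pose proof (int_Z_nonneg p _ P Hc). lra.
Qed.

Lemma int_Z_ge_mass p g r : is_prob_Z p -> Bnd g ->
  (forall k, (- Z.of_nat r < k < Z.of_nat r)%Z -> g k = 1) ->
  mass0 p r <= int_Z p g.
Proof.
  intros P Hg H1. pose proof P as [Hp _].
  destruct r as [|s].
  - unfold mass0. simpl. apply int_Z_nonneg; auto.
  - rewrite mass0_S. unfold int_Z. apply Rplus_le_compat.
    + eapply Rle_trans; [| apply partial_le].
      * right. apply fsum_ext_seq. intros i Hi. unfold pos_part. rewrite H1 by lia. ring.
      * intro n; unfold pos_part; specialize (Hp (Z.of_nat n)); specialize (Hg (Z.of_nat n)); nra.
      * apply ex_pp; auto.
    + eapply Rle_trans; [| apply partial_le].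
      * right. apply fsum_ext_seq. intros i Hi. unfold neg_part. rewrite H1 by lia. ring.
      * intro n; unfold neg_part; specialize (Hp (- Z.of_nat (S n))%Z); specialize (Hg (- Z.of_nat (S n))%Z); nra.
      * apply ex_np; auto.
Qed.

Lemma int_Z_van p g r : is_prob_Z p -> Bnd g ->
  (forall k, (- Z.of_nat r < k < Z.of_nat r)%Z -> g k = 0) ->
  int_Z p g <= 1 - mass0 p r.
Proof.
  intros P Hg H0.
  assert (Hc : Bnd (fun k => 1 - g k)) by (intro k; specialize (Hg k); lra).
  pose proof (int_Z_plus p g (fun k => 1 - g k) P Hg Hc) as E.
  rewrite (int_Z_ext p _ (fun _ => 1)) in E by (intro; ring).
  rewrite int_Z_one in E by auto.
  pose proof (int_Z_ge_mass p _ r P Hc) as M.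
  assert (mass0 p r <= int_Z p (fun k => 1 - g k)). { apply M. intros k Hk. rewrite H0 by auto. ring. }
  lra.
Qed.

Definition ee (k : Z) : nat := if Z.leb 0 k then S (Z.to_nat k) else Z.to_nat (- k).

Lemma pow2_pos n : 0 < 2 ^ n.
Proof. apply pow_lt; lra. Qed.

Lemma inv_pow_S n : / 2 ^ n - / 2 ^ S n = / 2 ^ S n.
Proof. pose proof (pow2_pos n). simpl. field. lra. Qed.

Lemma gap k : phi (Fin (k + 1)) - phi (Fin k) = / 2 ^ ee k.
Proof.
  unfold phi, ee.
  destruct (Z.leb_spec 0 k).
  - destruct (Z.leb_spec 0 (k+1)); [|lia].
    replace (Z.to_nat (k+1)) with (S (Z.to_nat k)) by lia.
    pose proof (inv_pow_S (Z.to_nat k)). lra.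
  - destruct (Z.leb_spec 0 (k+1)).
    + assert (k = -1)%Z by lia. subst. simpl. field.
    + replace (Z.to_nat (Z.abs k)) with (S (Z.to_nat (Z.abs (k+1)))) by lia.
      replace (Z.to_nat (- k)) with (S (Z.to_nat (Z.abs (k+1)))) by lia.
      pose proof (inv_pow_S (Z.to_nat (Z.abs (k+1)))). lra.
Qed.

Lemma gap_pos k : phi (Fin k) < phi (Fin (k + 1)).
Proof. pose proof (gap k). pose proof (pow2_pos (ee k)). pose proof (Rinv_0_lt_compat _ H0). lra. Qed.

Lemma phi_mono_d k d : phi (Fin k) <= phi (Fin (k + Z.of_nat d)).
Proof.
  induction d.
  - rewrite Z.add_0_r. lra.
  - replace (k + Z.of_nat (S d))%Z with ((k + Z.of_nat d) + 1)%Z by lia.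
    pose proof (gap_pos (k + Z.of_nat d)). lra.
Qed.

Lemma phi_mono k k' : (k <= k')%Z -> phi (Fin k) <= phi (Fin k').
Proof.
  intro H. replace k' with (k + Z.of_nat (Z.to_nat (k' - k)))%Z by lia. apply phi_mono_d.
Qed.

Lemma phi_bnd k : -1 <= phi (Fin k) <= 1.
Proof.
  unfold phi. assert (forall n, 0 < / 2 ^ n <= 1).
  { intro n. split. apply Rinv_0_lt_compat, pow2_pos.
    rewrite <- Rinv_1. apply Rinv_le_contravar; [lra|]. apply pow_R1_Rle. lra. }
  destruct (Z.leb 0 k); [pose proof (H (Z.to_nat k)) | pose proof (H (Z.to_nat (Z.abs k)))]; lra.
Qed.

Lemma above m z : (m + 1 <= z)%Z -> / 2 ^ ee m <= phi (Fin z) - phi (Fin m).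
Proof. intro H. rewrite <- gap. pose proof (phi_mono _ _ H). lra. Qed.
Lemma above_inf m : / 2 ^ ee m <= phi PosInf - phi (Fin m).
Proof. rewrite <- gap. pose proof (phi_bnd (m+1)). change (phi PosInf) with 1. lra. Qed.
Lemma below m z : (z <= m - 1)%Z -> / 2 ^ ee (m - 1) <= phi (Fin m) - phi (Fin z).
Proof. intro H. rewrite <- gap. replace (m - 1 + 1)%Z with m by lia. pose proof (phi_mono _ _ H). lra. Qed.
Lemma below_inf m : / 2 ^ ee (m - 1) <= phi (Fin m) - phi NegInf.
Proof. rewrite <- gap. replace (m - 1 + 1)%Z with m by lia. pose proof (phi_bnd (m-1)). change (phi NegInf) with (-1). lra. Qed.

Lemma inv_pow_le a b : (a <= b)%nat -> / 2 ^ b <= / 2 ^ a.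
Proof. intro H. apply Rinv_le_contravar. apply pow2_pos. apply Rle_pow; [lra|auto]. Qed.

Definition clampc (c x : R) : R := Rmax 0 (Rmin c x).
Definition tent (c x : R) : R := Rmax 0 (c - Rabs x).

Ltac crush := unfold clampc, tent, Rmax, Rmin in *;
  repeat (destruct Rle_dec); unfold Rabs in *; repeat (destruct Rcase_abs); lra.

Lemma clamp_lip c x y : 0 <= c -> Rabs (clampc c x - clampc c y) <= Rabs (x - y).
Proof. intros; crush. Qed.
Lemma clamp_bnd c x : 0 <= c -> 0 <= clampc c x <= c.
Proof. intros; crush. Qed.
Lemma clamp_hi c x : 0 <= c -> c <= x -> clampc c x = c.
Proof. intros; crush. Qed.
Lemma clamp_lo c x : 0 <= c -> x <= 0 -> clampc c x = 0.
Proof. intros; crush. Qed.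
Lemma min_lip a b a' b' t : Rabs (a - a') <= t -> Rabs (b - b') <= t -> Rabs (Rmin a b - Rmin a' b') <= t.
Proof. intros; crush. Qed.
Lemma min_0l a : 0 <= a -> Rmin 0 a = 0.
Proof. intros; crush. Qed.
Lemma min_0r a : 0 <= a -> Rmin a 0 = 0.
Proof. intros; crush. Qed.
Lemma min_cc c : Rmin c c = c.
Proof. intros; crush. Qed.
Lemma min_bnd a b c : 0 <= a <= c -> 0 <= b <= c -> 0 <= Rmin a b <= c.
Proof. intros; crush. Qed.
Lemma tent_lip c x y : Rabs (tent c x - tent c y) <= Rabs (x - y).
Proof. intros; crush. Qed.
Lemma tent_bnd c x : 0 <= c -> 0 <= tent c x <= c.
Proof. intros; crush. Qed.
Lemma tent_zero c x : c <= Rabs x -> tent c x = 0.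
Proof. intros; crush. Qed.
Lemma tent_top c : 0 <= c -> tent c 0 = c.
Proof. intros; crush. Qed.

Definition cc (R0 : nat) : R := / 2 ^ R0.
Definition Rz (R0 : nat) : Z := Z.of_nat R0.

Definition fplus R0 (h : zbar) : R := clampc (cc R0) (phi h - phi (Fin (Rz R0 - 1))).
Definition fminus R0 (h : zbar) : R := clampc (cc R0) (phi (Fin (- Rz R0 + 1)) - phi h).
Definition fzero R0 (h : zbar) : R :=
  Rmin (clampc (cc R0) (phi h - phi (Fin (- Rz R0)))) (clampc (cc R0) (phi (Fin (Rz R0)) - phi h)).
Definition ftent R0 (m : Z) (h : zbar) : R := tent (cc (S R0)) (phi h - phi (Fin m)).

Lemma cc_pos n : 0 < cc n.
Proof. apply Rinv_0_lt_compat, pow2_pos. Qed.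
Lemma cc_le1 n : cc n <= 1.
Proof. unfold cc. rewrite <- Rinv_1. apply Rinv_le_contravar; [lra|]. apply pow_R1_Rle. lra. Qed.
Lemma cc_S n : cc n = 2 * cc (S n).
Proof. unfold cc. simpl. pose proof (pow2_pos n). field. lra. Qed.

Lemma adm_fplus R0 : admissible (fplus R0).
Proof.
  pose proof (cc_pos R0). pose proof (cc_le1 R0). split.
  - intros h k. unfold fplus. eapply Rle_trans; [apply clamp_lip; lra|]. right; unfold Defs.dist; apply f_equal; ring.
  - intro h. unfold fplus. pose proof (clamp_bnd (cc R0) (phi h - phi (Fin (Rz R0 - 1)))). rewrite Rabs_pos_eq; lra.
Qed.
Lemma adm_fminus R0 : admissible (fminus R0).
Proof.
  pose proof (cc_pos R0). pose proof (cc_le1 R0). split.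
  - intros h k. unfold fminus, Defs.dist. eapply Rle_trans; [apply clamp_lip; lra|].
    replace (phi (Fin (- Rz R0 + 1)) - phi h - (phi (Fin (- Rz R0 + 1)) - phi k)) with (- (phi h - phi k)) by ring.
    rewrite Rabs_Ropp; lra.
  - intro h. unfold fminus. pose proof (clamp_bnd (cc R0) (phi (Fin (- Rz R0 + 1)) - phi h)). rewrite Rabs_pos_eq; lra.
Qed.
Lemma adm_fzero R0 : admissible (fzero R0).
Proof.
  pose proof (cc_pos R0). pose proof (cc_le1 R0). split.
  - intros h k. unfold fzero. apply min_lip; unfold Defs.dist.
    + eapply Rle_trans; [apply clamp_lip; lra|]. right; unfold Defs.dist; apply f_equal; ring.
    + eapply Rle_trans; [apply clamp_lip; lra|].
      replace (phi (Fin (Rz R0)) - phi h - (phi (Fin (Rz R0)) - phi k)) with (- (phi h - phi k)) by ring.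
      rewrite Rabs_Ropp; lra.
  - intro h. unfold fzero.
    assert (0 <= Rmin (clampc (cc R0) (phi h - phi (Fin (- Rz R0)))) (clampc (cc R0) (phi (Fin (Rz R0)) - phi h)) <= cc R0)
      by (apply min_bnd; apply clamp_bnd; lra).
    rewrite Rabs_pos_eq; lra.
Qed.
Lemma adm_ftent R0 m : admissible (ftent R0 m).
Proof.
  pose proof (cc_pos (S R0)). pose proof (cc_le1 (S R0)). split.
  - intros h k. unfold ftent. eapply Rle_trans; [apply tent_lip|]. right; unfold Defs.dist; apply f_equal; ring.
  - intro h. unfold ftent. pose proof (tent_bnd (cc (S R0)) (phi h - phi (Fin m))). rewrite Rabs_pos_eq; lra.
Qed.

Lemma le_tr a b c : b <= c -> a <= b -> a <= c.
Proof. intros; lra. Qed.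

Ltac eebound := apply inv_pow_le; unfold ee; match goal with |- context[Z.leb ?a ?b] => destruct (Z.leb_spec a b) end; unfold Rz in *; lia.

Lemma fplus_val R0 z : (1 <= R0)%nat ->
  fplus R0 (Fin z) = if Z.leb (Z.of_nat R0) z then cc R0 else 0.
Proof.
  intro HR. pose proof (cc_pos R0). unfold fplus. destruct (Z.leb_spec (Z.of_nat R0) z).
  - apply clamp_hi; [lra|]. eapply le_tr; [apply above; unfold Rz; lia|]. unfold cc. eebound.
  - apply clamp_lo; [lra|]. pose proof (phi_mono z (Rz R0 - 1)). unfold Rz in *. assert (phi (Fin z) <= phi (Fin (Z.of_nat R0 - 1))) by (apply H1; lia). lra.
Qed.
Lemma fplus_neg R0 : fplus R0 NegInf = 0.
Proof. unfold fplus. apply clamp_lo. pose proof (cc_pos R0); lra. pose proof (phi_bnd (Rz R0 - 1)). change (phi NegInf) with (-1). lra. Qed.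
Lemma fplus_pos R0 : (1 <= R0)%nat -> fplus R0 PosInf = cc R0.
Proof. intro HR. unfold fplus. pose proof (cc_pos R0). apply clamp_hi; [lra|].
  eapply le_tr; [apply above_inf|]. unfold cc. eebound. Qed.

Lemma fminus_val R0 z : (1 <= R0)%nat ->
  fminus R0 (Fin z) = if Z.leb z (- Z.of_nat R0) then cc R0 else 0.
Proof.
  intro HR. pose proof (cc_pos R0). unfold fminus. destruct (Z.leb_spec z (- Z.of_nat R0)).
  - apply clamp_hi; [lra|]. eapply le_tr; [apply below; unfold Rz; lia|]. unfold cc. eebound.
  - apply clamp_lo; [lra|]. pose proof (phi_mono (- Rz R0 + 1) z). unfold Rz in *. assert (phi (Fin (- Z.of_nat R0 + 1)) <= phi (Fin z)) by (apply H1; lia). lra.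
Qed.
Lemma fminus_pos R0 : fminus R0 PosInf = 0.
Proof. unfold fminus. apply clamp_lo. pose proof (cc_pos R0); lra. pose proof (phi_bnd (- Rz R0 + 1)). change (phi PosInf) with 1. lra. Qed.
Lemma fminus_neg R0 : (1 <= R0)%nat -> fminus R0 NegInf = cc R0.
Proof. intro HR. unfold fminus. pose proof (cc_pos R0). apply clamp_hi; [lra|].
  eapply le_tr; [apply below_inf|]. unfold cc. eebound. Qed.

Lemma fzero_val R0 z : (1 <= R0)%nat ->
  fzero R0 (Fin z) = if andb (Z.leb (- Z.of_nat R0 + 1) z) (Z.leb z (Z.of_nat R0 - 1)) then cc R0 else 0.
Proof.
  intro HR. pose proof (cc_pos R0). unfold fzero.
  pose proof (clamp_bnd (cc R0) (phi (Fin z) - phi (Fin (- Rz R0)))) as B1.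
  pose proof (clamp_bnd (cc R0) (phi (Fin (Rz R0)) - phi (Fin z))) as B2.
  destruct (Z.leb_spec (- Z.of_nat R0 + 1) z); destruct (Z.leb_spec z (Z.of_nat R0 - 1)); cbn [andb].
  - rewrite (clamp_hi _ (phi (Fin z) - _)); [| lra |].
    + rewrite clamp_hi; [apply min_cc | lra |].
      eapply le_tr; [apply below; unfold Rz; lia|]. unfold cc. eebound.
    + eapply le_tr; [apply above; unfold Rz; lia|]. unfold cc. eebound.
  - rewrite (clamp_lo _ (phi (Fin (Rz R0)) - _)); [apply min_0r; lra | lra |].
    pose proof (phi_mono (Rz R0) z). unfold Rz in *. assert (phi (Fin (Z.of_nat R0)) <= phi (Fin z)) by (apply H2; lia). lra.
  - rewrite (clamp_lo _ (phi (Fin z) - _)); [apply min_0l; lra | lra |].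
    pose proof (phi_mono z (- Rz R0)). unfold Rz in *. assert (phi (Fin z) <= phi (Fin (- Z.of_nat R0))) by (apply H2; lia). lra.
  - lia.
Qed.

Lemma fzero_neg R0 : fzero R0 NegInf = 0.
Proof.
  unfold fzero. pose proof (cc_pos R0).
  rewrite (clamp_lo _ (phi NegInf - _)); [apply min_0l, clamp_bnd; lra | lra |].
  pose proof (phi_bnd (- Rz R0)). change (phi NegInf) with (-1). lra.
Qed.
Lemma fzero_pos R0 : fzero R0 PosInf = 0.
Proof.
  unfold fzero. pose proof (cc_pos R0).
  rewrite (clamp_lo _ (phi (Fin (Rz R0)) - phi PosInf)); [apply min_0r, clamp_bnd; lra | lra |].
  pose proof (phi_bnd (Rz R0)). change (phi PosInf) with 1. lra.
Qed.

Lemma ftent_val R0 m z : (ee m <= S R0)%nat -> (ee (m - 1) <= S R0)%nat ->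
  ftent R0 m (Fin z) = if Z.eqb z m then cc (S R0) else 0.
Proof.
  intros H1 H2. pose proof (cc_pos (S R0)). unfold ftent.
  destruct (Z.eqb_spec z m).
  - subst. replace (phi (Fin m) - phi (Fin m)) with 0 by ring. apply tent_top; lra.
  - apply tent_zero. destruct (Z.le_gt_cases z (m - 1)) as [Hz|Hz].
    + pose proof (below m z Hz) as A. pose proof (inv_pow_le _ _ H2) as B.
      pose proof (pow2_pos (ee (m-1))) as C. pose proof (Rinv_0_lt_compat _ C) as D.
      rewrite Rabs_left1 by lra. unfold cc. lra.
    + assert (Hz' : (m + 1 <= z)%Z) by lia. pose proof (above m z Hz') as A.
      pose proof (inv_pow_le _ _ H1) as B. pose proof (pow2_pos (ee m)) as C. pose proof (Rinv_0_lt_compat _ C) as D.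
      rewrite Rabs_pos_eq by lra. unfold cc. lra.
Qed.

Lemma ftent_pos R0 m : (ee m <= S R0)%nat -> ftent R0 m PosInf = 0.
Proof.
  intros H1. unfold ftent. apply tent_zero. pose proof (above_inf m).
  pose proof (inv_pow_le _ _ H1). pose proof (pow2_pos (ee m)) as C. pose proof (Rinv_0_lt_compat _ C).
  rewrite Rabs_pos_eq by lra. unfold cc. lra.
Qed.
Lemma ftent_neg R0 m : (ee (m - 1) <= S R0)%nat -> ftent R0 m NegInf = 0.
Proof.
  intros H1. unfold ftent. apply tent_zero. pose proof (below_inf m).
  pose proof (inv_pow_le _ _ H1). pose proof (pow2_pos (ee (m - 1))) as C. pose proof (Rinv_0_lt_compat _ C).
  rewrite Rabs_left1 by lra. unfold cc. lra.
Qed.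

Definition Dm (am a0 ap : R) (p : Z -> R) (w : list Z) (f : zbar -> R) : R :=
  int_ell w f - int_mu am a0 ap p f.

Lemma fold_opp (F : Z -> R) w :
  fold_right Rplus 0 (map (fun z => - F z) w) = - fold_right Rplus 0 (map F w).
Proof. induction w; simpl; [ring | rewrite IHw; ring]. Qed.

Lemma Dm_opp am a0 ap p w f : Dm am a0 ap p w (fun h => - f h) = - Dm am a0 ap p w f.
Proof.
  unfold Dm, int_ell, int_mu. rewrite fold_opp.
  rewrite (int_Z_opp p (fun k => f (Fin k))). ring.
Qed.

Lemma adm_opp f : admissible f -> admissible (fun h => - f h).
Proof.
  intros [H1 H2]. split.
  - intros h k. replace (- f h - - f k) with (- (f h - f k)) by ring. rewrite Rabs_Ropp. auto.
  - intro h. rewrite Rabs_Ropp. auto.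
Qed.

Lemma D_lt n am a0 ap p d w f : Omega0_ball n am a0 ap p d w -> admissible f ->
  Dm am a0 ap p w f < d.
Proof.
  intros [_ H] Hf. unfold dual_norm in H.
  pose proof (Lub_Rbar_correct (fun x => exists f, admissible f /\ x = int_ell w f - int_mu am a0 ap p f)) as [Hub _].
  assert (Hx : Rbar_le (Dm am a0 ap p w f) (Lub_Rbar (fun x => exists f, admissible f /\ x = int_ell w f - int_mu am a0 ap p f))).
  { apply Hub. exists f. split; auto. }
  destruct (Lub_Rbar _); simpl in *; try contradiction; lra.
Qed.

Lemma D_bound n am a0 ap p d w f : Omega0_ball n am a0 ap p d w -> admissible f ->
  - d < Dm am a0 ap p w f < d.
Proof.
  intros H Hf. split.
  - pose proof (D_lt _ _ _ _ _ _ _ _ H (adm_opp f Hf)). rewrite Dm_opp in H0. lra.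
  - eapply D_lt; eauto.
Qed.

Lemma fold_ind (F : Z -> R) (b : Z -> bool) c w :
  (forall z, F z = if b z then c else 0) ->
  fold_right Rplus 0 (map F w) = c * INR (length (filter b w)).
Proof.
  intro H. induction w; simpl.
  - ring.
  - rewrite IHw, H. destruct (b a); simpl length; [rewrite S_INR|]; ring.
Qed.

Definition ind (b : Z -> bool) (k : Z) : R := if b k then 1 else 0.

Lemma Bnd_ind b : Bnd (ind b).
Proof. intro k; unfold ind; destruct (b k); lra. Qed.

Lemma Dm_form am a0 ap p (w : list Z) (f : zbar -> R) (b : Z -> bool) (c : R) :
  (forall z, f (Fin z) = if b z then c else 0) ->
  Dm am a0 ap p w f = / INR (length w) * (c * INR (length (filter b w)))
     - (am * f NegInf + a0 * (c * int_Z p (ind b)) + ap * f PosInf).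
Proof.
  intro H. unfold Dm, int_ell, int_mu. rewrite (fold_ind _ b c w) by (intro; apply H).
  rewrite (int_Z_ext p _ (fun k => c * ind b k)).
  - rewrite int_Z_scal. reflexivity.
  - intro k. rewrite H. unfold ind. destruct (b k); ring.
Qed.

Lemma arith1 c t nn N X e : 0 < c -> 0 < nn -> t * nn = 1 ->
  - (c * e) < c * (N * t - X) < c * e -> - (e * nn) < N - X * nn < e * nn.
Proof.
  intros Hc Hn Ht [H1 H2].
  assert (A1: - e < N * t - X) by (apply (Rmult_lt_reg_l c); lra).
  assert (A2: N * t - X < e) by (apply (Rmult_lt_reg_l c); lra).
  assert (E: (N * t - X) * nn = N - X * nn).
  { replace N with (N * (t * nn)) at 2 by (rewrite Ht; ring). ring. }
  split.
  - rewrite <- E. replace (- (e * nn)) with ((- e) * nn) by ring. apply Rmult_lt_compat_r; auto.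
  - rewrite <- E. apply Rmult_lt_compat_r; auto.
Qed.

Lemma van_ind p (b : Z -> bool) r eps : is_prob_Z p -> mass0 p r > 1 - eps ->
  (forall k, (- Z.of_nat r < k < Z.of_nat r)%Z -> b k = false) ->
  0 <= int_Z p (ind b) < eps.
Proof.
  intros P M H. split.
  - apply int_Z_nonneg; auto. apply Bnd_ind.
  - assert (int_Z p (ind b) <= 1 - mass0 p r); [|lra].
    apply int_Z_van; auto. apply Bnd_ind. intros k Hk. unfold ind. rewrite H; auto.
Qed.

Lemma full_ind p (b : Z -> bool) r eps : is_prob_Z p -> mass0 p r > 1 - eps ->
  (forall k, (- Z.of_nat r < k < Z.of_nat r)%Z -> b k = true) ->
  1 - eps < int_Z p (ind b) <= 1.
Proof.
  intros P M H. split.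
  - assert (mass0 p r <= int_Z p (ind b)); [|lra].
    apply int_Z_ge_mass; auto. apply Bnd_ind. intros k Hk. unfold ind. rewrite H; auto.
  - apply int_Z_le1; auto. apply Bnd_ind.
Qed.

Lemma fin_pm a a0 u eps nn N : 0 <= a0 <= 1 -> 0 <= u < eps -> 0 < nn ->
  - (eps * nn) < N - (a + a0 * u) * nn < eps * nn -> Rabs (N - a * nn) < 2 * eps * nn.
Proof.
  intros Ha Hu Hn H.
  assert (0 <= a0 * u * nn) by (apply Rmult_le_pos; [apply Rmult_le_pos|]; lra).
  assert (a0 * u * nn <= eps * nn).
  { apply Rmult_le_compat_r; [lra|]. nra. }
  apply Rabs_def1; nra.
Qed.

Lemma fin_zero a0 u eps nn N : 0 <= a0 <= 1 -> 1 - eps < u <= 1 -> 0 < nn ->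
  - (eps * nn) < N - (a0 * u) * nn < eps * nn -> Rabs (N - a0 * nn) < 2 * eps * nn.
Proof.
  intros Ha Hu Hn H.
  assert (0 <= a0 * (1 - u) * nn) by (apply Rmult_le_pos; [apply Rmult_le_pos|]; lra).
  assert (a0 * (1 - u) * nn <= eps * nn).
  { apply Rmult_le_compat_r; [lra|]. nra. }
  apply Rabs_def1; nra.
Qed.

Lemma fin_tent a0 u eps nn N : 0 <= a0 <= 1 -> 0 <= u < eps -> 0 < nn ->
  - (2 * eps * nn) < N - (a0 * u) * nn < 2 * eps * nn -> N < 3 * eps * nn.
Proof.
  intros Ha Hu Hn H.
  assert (a0 * u * nn <= eps * nn).
  { apply Rmult_le_compat_r; [lra|]. nra. }
  nra.
Qed.

Theorem lemma2p3 (am a0 ap : R) (p : Z -> R) (eps : R) (R0 : nat) :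
  0 <= am -> 0 <= a0 -> 0 <= ap -> am + a0 + ap = 1 ->
  is_prob_Z p ->
  0 < eps ->
  (exists r, is_Rmu0 p eps r /\ (r < R0)%nat) ->
  forall (n : nat) (w : list Z),
    Omega0_ball n am a0 ap p (/ pow 2 R0 * eps) w ->
    Rabs (INR (cnt_minus R0 w) - am * INR n) < 2 * eps * INR n /\
    Rabs (INR (cnt_zero R0 w) - a0 * INR n) < 2 * eps * INR n /\
    Rabs (INR (cnt_plus R0 w) - ap * INR n) < 2 * eps * INR n /\
    (forall m : Z,
       m = (- Z.of_nat R0)%Z \/ m = (- Z.of_nat R0 + 1)%Z \/
       m = (Z.of_nat R0 - 1)%Z \/ m = Z.of_nat R0 ->
       INR (cnt_m m w) < 3 * eps * INR n).
Proof.
  intros Ham Ha0 Hap Hsum P Heps [r [[Hr _] HrR]] n w Hw.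
  assert (HR : (1 <= R0)%nat) by lia.
  pose proof Hw as [[Hlen [Hhd _]] _].
  assert (Hn : 0 < INR n).
  { apply lt_0_INR. destruct w; simpl in Hhd; [discriminate|]. simpl in Hlen. lia. }
  assert (Ht : / INR (length w) * INR n = 1) by (rewrite Hlen; field; lra).
  assert (Ha0' : 0 <= a0 <= 1) by lra.
  change (/ pow 2 R0 * eps) with (cc R0 * eps) in Hw.
  pose proof (cc_pos R0) as Hc.
  split; [|split; [|split]].
  -
    pose proof (D_bound _ _ _ _ _ _ _ _ Hw (adm_fminus R0)) as D.
    rewrite (Dm_form _ _ _ _ _ _ (fun z => Z.leb z (- Z.of_nat R0)) (cc R0)) in D
      by (intro; apply fminus_val; auto).
    rewrite fminus_neg, fminus_pos in D by auto.
    pose proof (van_ind p (fun z => Z.leb z (- Z.of_nat R0)) r eps P Hr) as U.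
    assert (U' : 0 <= int_Z p (ind (fun z => Z.leb z (- Z.of_nat R0))) < eps)
      by (apply U; intros k Hk; apply Z.leb_gt; lia).
    unfold cnt_minus.
    apply (fin_pm _ a0 (int_Z p (ind (fun z => Z.leb z (- Z.of_nat R0))))); auto.
    apply (arith1 (cc R0) (/ INR (length w))); auto.
    replace (cc R0 * (INR (length (filter (fun z => Z.leb z (- Z.of_nat R0)) w)) * / INR (length w) -
       (am + a0 * int_Z p (ind (fun z => Z.leb z (- Z.of_nat R0))))))
    with (/ INR (length w) * (cc R0 * INR (length (filter (fun z => Z.leb z (- Z.of_nat R0)) w))) -
       (am * cc R0 + a0 * (cc R0 * int_Z p (ind (fun z => Z.leb z (- Z.of_nat R0)))) + ap * 0)) by ring.
    exact D.
  -
    pose proof (D_bound _ _ _ _ _ _ _ _ Hw (adm_fzero R0)) as D.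
    set (b := fun z => andb (Z.leb (- Z.of_nat R0 + 1) z) (Z.leb z (Z.of_nat R0 - 1))).
    rewrite (Dm_form _ _ _ _ _ _ b (cc R0)) in D
      by (intro; apply fzero_val; auto).
    rewrite fzero_neg, fzero_pos in D by auto.
    assert (U' : 1 - eps < int_Z p (ind b) <= 1).
    { apply (full_ind p b r eps P Hr). intros k Hk. unfold b. apply andb_true_intro; split; apply Z.leb_le; lia. }
    unfold cnt_zero. fold b.
    apply (fin_zero a0 (int_Z p (ind b))); auto.
    apply (arith1 (cc R0) (/ INR (length w))); auto.
    replace (cc R0 * (INR (length (filter b w)) * / INR (length w) - a0 * int_Z p (ind b)))
    with (/ INR (length w) * (cc R0 * INR (length (filter b w))) -
       (am * 0 + a0 * (cc R0 * int_Z p (ind b)) + ap * 0)) by ring.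
    exact D.
  -
    pose proof (D_bound _ _ _ _ _ _ _ _ Hw (adm_fplus R0)) as D.
    set (b := fun z => Z.leb (Z.of_nat R0) z).
    rewrite (Dm_form _ _ _ _ _ _ b (cc R0)) in D
      by (intro; apply fplus_val; auto).
    rewrite fplus_neg, fplus_pos in D by auto.
    assert (U' : 0 <= int_Z p (ind b) < eps).
    { apply (van_ind p b r eps P Hr). intros k Hk. unfold b. apply Z.leb_gt; lia. }
    unfold cnt_plus. fold b.
    apply (fin_pm _ a0 (int_Z p (ind b))); auto.
    apply (arith1 (cc R0) (/ INR (length w))); auto.
    replace (cc R0 * (INR (length (filter b w)) * / INR (length w) - (ap + a0 * int_Z p (ind b))))
    with (/ INR (length w) * (cc R0 * INR (length (filter b w))) -
       (am * 0 + a0 * (cc R0 * int_Z p (ind b)) + ap * cc R0)) by ring.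
    exact D.
  -
    intros m Hm.
    assert (E1 : (ee m <= S R0)%nat) by (unfold ee; destruct (Z.leb_spec 0 m); lia).
    assert (E2 : (ee (m - 1) <= S R0)%nat) by (unfold ee; destruct (Z.leb_spec 0 (m - 1)); lia).
    pose proof (D_bound _ _ _ _ _ _ _ _ Hw (adm_ftent R0 m)) as D.
    set (b := fun z => Z.eqb z m).
    rewrite (Dm_form _ _ _ _ _ _ b (cc (S R0))) in D
      by (intro; apply ftent_val; auto).
    rewrite ftent_neg, ftent_pos in D by auto.
    assert (U' : 0 <= int_Z p (ind b) < eps).
    { apply (van_ind p b r eps P Hr). intros k Hk. unfold b. apply Z.eqb_neq; lia. }
    unfold cnt_m. fold b.
    apply (fin_tent a0 (int_Z p (ind b))); auto.
    pose proof (cc_pos (S R0)).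
    replace (2 * eps * INR n) with ((2 * eps) * INR n) by ring.
    apply (arith1 (cc (S R0)) (/ INR (length w))); auto.
    rewrite (cc_S R0) in D.
    replace (cc (S R0) * (INR (length (filter b w)) * / INR (length w) - a0 * int_Z p (ind b)))
    with (/ INR (length w) * (cc (S R0) * INR (length (filter b w))) -
       (am * 0 + a0 * (cc (S R0) * int_Z p (ind b)) + ap * 0)) by ring.
    replace (cc (S R0) * (2 * eps)) with (2 * cc (S R0) * eps) by ring.
    exact D.
Qed.
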